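(* Let $T_r$ be a resistive dyadic tree with resistances $r=(r_n^k)_{n\ge 1,\,0\le k\le 2^n-1}$ (notation in the context), and assume $$\sum_{n\geq 1} \frac{1}{2^n}\max_{0\le k\le 2^n-1} r_n^k < +\infty .$$ Then for every $p\in H^1(T_r)$ the sequence $(\tilde p_n)_{n\ge 0}$ converges strongly in $L^2(\mathbb{Z}_2)$ to some $\tilde p\in L^2(\mathbb{Z}_2)$, and the linear operator $\gamma_0: p\mapsto \tilde p$ is a bounded linear operator from $H^1(T_r)$ to $L^2(\mathbb{Z}_2)$.
   Context: The infinite dyadic tree $T$ has vertex set $V$ equal to the disjoint union over $n\ge 0$ of the sets $\mathbb{Z}/2^n\mathbb{Z}$; $x_n^k$ denotes $k\in\mathbb{Z}/2^n\mathbb{Z}$ ($0\le k\le 2^n-1$), the $k$-th vertex of generation $n$, and $x_0^0$ is the root. For $n<m$, $\varphi_n^m:\mathbb{Z}/2^m\mathbb{Z}\to\mathbb{Z}/2^n\mathbb{Z}$ is the canonical surjection. For $n\ge1$, the edge $e_n^k$ joins $x_n^k$ to its parent $\varphi_{n-1}^n(x_n^k)$, and these are all the edges. A resistive dyadic tree $T_r$ is $T$ together with positive numbers $r_n^k$ ($n\ge1$, $0\le k\le 2^n-1$), $r_n^k$ being the resistance of $e_n^k$. For $p:V\to\mathbb{R}$ set $$|p|_{H^1}^2=\sum_{n\ge1}\sum_{k=0}^{2^n-1}\frac{|p(x_n^k)-p(\varphi_{n-1}^n(x_n^k))|^2}{r_n^k},$$ and $H^1(T_r)=\{p:V\to\mathbb{R}: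 |p|_{H^1}<\infty\}$, normed by $\|p\|_{H^1(T_r)}^2=|p(x_0^0)|^2+|p|_{H^1}^2$. $\mathbb{Z}_2$ is the ring of 2-adic integers with 2-adic absolute value $|\cdot|_2$ and Haar probability measure $\mu$ (so $\mu(a+2^n\mathbb{Z}_2)=2^{-n}$); $L^2(\mathbb{Z}_2)$ is taken with respect to $\mu$. For $p:V\to\mathbb{R}$ and $n\ge0$, $\tilde p_n:\mathbb{Z}_2\to\mathbb{R}$ is defined by $\tilde p_n(x)=p(x_n^a)$, where $a\in\{0,\dots,2^n-1\}$ is the unique integer with $x\in a+2^n\mathbb{Z}_2$. *)

(* Defs.v *)
From HB Require Import structures.
From mathcomp Require Import all_boot all_order all_algebra.
From mathcomp Require Import all_classical all_reals all_analysis.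
Set Implicit Arguments. Unset Strict Implicit. Unset Printing Implicit Defensive.
Import Order.TTheory GRing.Theory Num.Theory.
Local Open Scope classical_set_scope.
Local Open Scope ring_scope.

(* 2-adic integers represented by their digit sequences:
   x = \sum_i x_i 2^i  <->  (x_i)_i : nat -> bool. *)
Definition Z2digits := nat -> bool.

(* a_n(x) = the unique a in {0,..,2^n-1} with x \in a + 2^n Z_2 *)
Definition trunc2 (n : nat) (x : Z2digits) : nat :=
  (\sum_(i < n) (x i : nat) * 2 ^ i)%N.

Definition coset2 (n a : nat) : set Z2digits := [set x | trunc2 n x = a].

(* the generating family of cosets; the sigma-algebra they generate is the
   Borel sigma-algebra of Z_2 *)
Definition cosets2 : set (set Z2digits) :=
  [set A | exists n a, A = coset2 n a].

Definition Z2 := g_sigma_algebraType cosets2.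

(* a function p : V -> R is encoded as p n k = p(x_n^k) for k < 2^n
   (values for k >= 2^n are irrelevant and never used) *)
Definition vfun (R : Type) := nat -> nat -> R.

(* parent of x_n^k (n >= 1) is x_{n-1}^{k mod 2^{n-1}} *)
Definition H1term (R : realType) (r : vfun R) (p : vfun R) (n : nat) : R :=
  \sum_(k < 2 ^ n) (p n k - p n.-1 (k %% 2 ^ n.-1)%N) ^+ 2 / r n k.

Definition H1semi2 (R : realType) (r p : vfun R) : \bar R :=
  (\sum_(1 <= n <oo) (H1term r p n)%:E)%E.

Definition inH1 (R : realType) (r p : vfun R) : Prop := (H1semi2 r p < +oo)%E.

Definition H1norm2 (R : realType) (r p : vfun R) : R :=
  p 0%N 0%N ^+ 2 + fine (H1semi2 r p).

Definition ptilde (R : Type) (p : vfun R) (n : nat) : Z2 -> R :=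
  fun x => p n (trunc2 n x).

Definition L2limit (R : realType) (mu : {measure set Z2 -> \bar R})
    (p : vfun R) (f : Z2 -> R) : Prop :=
  measurable_fun setT f /\
  mu.-integrable setT (fun x => (f x ^+ 2)%:E) /\
  ((fun n => (\int[mu]_x ((ptilde p n x - f x) ^+ 2)%:E)%E) @ \oo --> 0%E).

(* Main.v *)
Require Import Defs.
From HB Require Import structures.
From mathcomp Require Import all_boot all_order all_algebra.
From mathcomp Require Import all_classical all_reals all_analysis.
From mathcomp Require Import measurable_realfun.
From mathcomp Require Import zify ring lra.
Import Order.TTheory GRing.Theory Num.Theory.
Local Open Scope classical_set_scope.
Import numFieldNormedType.Exports.
Local Open Scope ring_scope.

Lemma trunc2S n x : trunc2 n.+1 x = (trunc2 n x + x n * 2 ^ n)%N.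
Proof. by rewrite /trunc2 big_ord_recr. Qed.

Lemma trunc2_lt n x : (trunc2 n x < 2 ^ n)%N.
Proof.
elim: n => [|n IH]; first by rewrite /trunc2 big_ord0.
rewrite trunc2S expnS; case: (x n) => /=; lia.
Qed.

Lemma trunc2_mod n x : trunc2 n.-1 x = (trunc2 n x %% 2 ^ n.-1)%N.
Proof.
case: n => [|n] /=; first by rewrite /trunc2 !big_ord0 mod0n.
by rewrite trunc2S addnC modnMDl modn_small // trunc2_lt.
Qed.

Lemma trunc20 x : trunc2 0 x = 0%N.
Proof. by rewrite /trunc2 big_ord0. Qed.

Lemma coset2_meas n a : measurable (coset2 n a : set Z2).
Proof. by apply: sub_sigma_algebra; exists n, a. Qed.

Lemma meas_trunc d' (T' : measurableType d') (h : nat -> T') n :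
  measurable_fun setT (fun x : Z2 => h (trunc2 n x)).
Proof.
move=> _ Y mY; rewrite setTI.
rewrite (_ : _ @^-1` _ = \bigcup_j (if pselect (Y (h j)) is left _ then coset2 n j else set0)).
  by apply: bigcupT_measurable => j; case: pselect => _ //; exact: coset2_meas.
apply/seteqP; split => x /=.
  by move=> Yx; exists (trunc2 n x) => //; case: pselect.
by move=> [j _]; case: pselect => // Yj; rewrite /coset2 /= => ->.
Qed.

Section Step.
Variable R : realType.
Variable mu : probability Z2 R.
Hypothesis hmu : forall n a : nat, (a < 2 ^ n)%N -> mu (coset2 n a) = ((2%:R ^- n : R)%:E).

Lemma int_step (h : nat -> R) n : (forall j, 0 <= h j) ->
  (\int[mu]_x (h (trunc2 n x))%:E = (\sum_(j < 2^n) h j * 2%:R ^- n)%:E)%E.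
Proof.
move=> h0.
have E : (fun x => (h (trunc2 n x))%:E) =
   (fun x => \sum_(j < 2^n) ((h j)%:E * (\1_(coset2 n j) x)%:E))%E.
  apply/funext => x; rewrite (bigD1 (Ordinal (trunc2_lt n x))) //= big1.
    by rewrite indicE mem_set // mule1 adde0.
  move=> j /eqP nj; rewrite indicE memNset ?mule0 //.
  by rewrite /coset2 /= => ej; apply: nj; apply: val_inj => /=.
rewrite E ge0_integral_sum //; last first.
- by move=> j x _; apply: mule_ge0; rewrite lee_fin.
- move=> j; apply: measurable_funeM; apply/measurable_EFinP.
  exact: (measurable_indic (coset2_meas n j)).
rewrite -sumEFin; apply: eq_bigr => j _.
rewrite (ge0_integralZl_EFin _ measurableT); last 3 first.
- by move=> x _; rewrite lee_fin.
- by apply/measurable_EFinP; exact: (measurable_indic (coset2_meas n j)).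
- exact: h0.
rewrite integral_indic ?coset2_meas //.
rewrite (_ : _ `&` _ = coset2 n j); last by apply/seteqP; split => x //= [].
  by move: (@hmu n j (ltn_ord j)) => /= ->; rewrite EFinM.
exact: coset2_meas.
Qed.
End Step.

Lemma cs_step (R : realType) (X S Q d w : R) : X ^+ 2 <= S * Q -> 0 <= S -> 0 <= Q -> 0 < w ->
  (X + d) ^+ 2 <= (S + w) * (Q + d ^+ 2 / w).
Proof.
move=> h hS hQ hw.
have wn : w != 0 by rewrite gt_eqF.
have [e ->] : exists e, d = e * w by exists (d / w); rewrite divfK.
have -> : (e * w) ^+ 2 / w = e ^+ 2 * w by field.

have key : 0 <= S * e ^+ 2 - 2 * X * e + Q.
  have [S0|Sp] := eqVneq S 0.
    have : X ^+ 2 <= 0 by rewrite S0 mul0r in h.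
    rewrite S0; nra.
  have Sp' : 0 < S by rewrite lt_def Sp hS.
  have : 0 <= S * (S * e ^+ 2 - 2 * X * e + Q).
    have -> : S * (S * e ^+ 2 - 2 * X * e + Q) = (S * e - X) ^+ 2 + (S * Q - X ^+ 2) by ring.
    by apply: addr_ge0; [exact: sqr_ge0| rewrite subr_ge0].
  by rewrite pmulr_rge0.
nra.
Qed.

Lemma abs_le_am (R : realType) (d w : R) : 0 < w -> `|d| <= (w + d ^+ 2 / w) / 2.
Proof.
move=> hw.
have wn : w != 0 by rewrite gt_eqF.
have [e ->] : exists e, d = e * w by exists (d / w); rewrite divfK.
have -> : (e * w) ^+ 2 / w = e ^+ 2 * w by field.
rewrite normrM (gtr0_norm hw).
have : 0 <= (1 - `|e|) ^+ 2 * w by apply: mulr_ge0 => //; [exact: sqr_ge0|exact: ltW].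
rewrite -[e ^+ 2]real_normK ?num_real // => h.
rewrite -subr_ge0.
have -> : (w + `|e| ^+ 2 * w) / 2 - `|e| * w = (1 - `|e|) ^+ 2 * w / 2 by field.
by apply: divr_ge0.
Qed.

Lemma sq_le2 (R : realType) (x y : R) : (x + y) ^+ 2 <= 2 * x ^+ 2 + 2 * y ^+ 2.
Proof. rewrite -subr_ge0; have -> : 2 * x ^+ 2 + 2 * y ^+ 2 - (x + y) ^+ 2 = (x - y) ^+ 2 by ring. exact: sqr_ge0. Qed.

Lemma le_bigmax0 (R : realType) (N : nat) (F : nat -> R) i : (i < N)%N ->
  F i <= \big[Num.max/0]_(k < N) F k.
Proof.
elim: N F i => [//|N IH] F i hi; rewrite big_ord_recl le_max /=.
case: i hi => [_|i hi]; first by rewrite lexx.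
by apply/orP; right; exact: (IH (fun k => F k.+1) i hi).
Qed.

Lemma bigmax0_ge0 (R : realType) (N : nat) (F : nat -> R) :
  0 <= \big[Num.max/0]_(k < N) F k.
Proof.
elim: N F => [|N IH] F; first by rewrite big_ord0.
by rewrite big_ord_recl le_max (IH (fun k => F k.+1)) orbT.
Qed.

Lemma eseries_shift1 (R : realType) (f : nat -> \bar R) : (forall n, 0 <= f n)%E ->
  (\sum_(n <oo) f n.+1 = \sum_(1 <= n <oo) f n)%E.
Proof.
move=> f0.
have c1 : cvgn (fun n => \sum_(1 <= i < n) f i)%E by apply: is_cvg_nneseries.
apply: cvg_lim => //.
have E n : (\sum_(0 <= k < n) f k.+1 = \sum_(1 <= k < n.+1) f k)%E by rewrite big_add1.
under eq_fun => n do rewrite E.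
have := cvg_shiftS (fun n => \sum_(1 <= k < n) f k)%E (nbhs (\sum_(1 <= n <oo) f n)%E).
move=> H.
have c1' : (\sum_(1 <= k < n) f k)%E @[n --> \oo] --> nbhs (\sum_(1 <= n <oo) f n)%E := c1.
rewrite -H in c1'; exact: c1'.
Qed.

Section Gen.
Variable R : realType.
Variable mu : probability Z2 R.

Lemma sq_meas (g : Z2 -> R) : measurable_fun setT g ->
  measurable_fun setT (fun x => (g x ^+ 2)%:E).
Proof. by move=> mg; apply/measurable_EFinP; exact: measurable_funX. Qed.

Lemma lin_meas (g h : Z2 -> R) a b : measurable_fun setT g -> measurable_fun setT h ->
  measurable_fun setT (fun x => a * g x + b * h x).
Proof.
move=> mg mh; apply: measurable_funD; apply: measurable_funM => //; exact: measurable_cst.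
Qed.

Lemma int_comb (g h : Z2 -> R) a b : measurable_fun setT g -> measurable_fun setT h ->
  (\int[mu]_x ((a * g x + b * h x) ^+ 2)%:E <=
    (2 * a ^+ 2)%:E * \int[mu]_x (g x ^+ 2)%:E + (2 * b ^+ 2)%:E * \int[mu]_x (h x ^+ 2)%:E)%E.
Proof.
move=> mg mh.
have m1 := sq_meas _ mg; have m2 := sq_meas _ mh.
have p2 : forall c : R, 0 <= 2 * c ^+ 2 by move=> c; apply: mulr_ge0 => //; exact: sqr_ge0.
apply: (@le_trans _ _ (\int[mu]_x ((2 * a ^+ 2)%:E * (g x ^+ 2)%:E + (2 * b ^+ 2)%:E * (h x ^+ 2)%:E))%E).
  apply: ge0_le_integral => //.
  - by move=> x _; rewrite lee_fin sqr_ge0.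
  - exact: (sq_meas _ (lin_meas g h a b mg mh)).
  - by apply: emeasurable_funD; apply: measurable_funeM.
  - move=> x _; rewrite -!EFinM -EFinD lee_fin.
    by have := sq_le2 _ (a * g x) (b * h x); rewrite !exprMn !mulrA.
rewrite ge0_integralD //; last 4 first.
- by move=> x _; apply: mule_ge0; rewrite lee_fin ?p2 ?sqr_ge0.
- exact: measurable_funeM.
- by move=> x _; apply: mule_ge0; rewrite lee_fin ?p2 ?sqr_ge0.
- exact: measurable_funeM.
rewrite ge0_integralZl_EFin //; try exact: p2; try by move=> x _; rewrite lee_fin sqr_ge0.
rewrite ge0_integralZl_EFin //; try exact: p2; try by move=> x _; rewrite lee_fin sqr_ge0.
Qed.

Lemma int_sq_le (g h : Z2 -> R) : measurable_fun setT g -> measurable_fun setT h ->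
  (\int[mu]_x (g x ^+ 2)%:E <=
    2%:E * \int[mu]_x ((h x - g x) ^+ 2)%:E + 2%:E * \int[mu]_x (h x ^+ 2)%:E)%E.
Proof.
move=> mg mh.
have mhg : measurable_fun setT (fun x => h x - g x) by exact: measurable_funB.
have := int_comb _ _ (-1) 1 mhg mh.
rewrite (_ : (fun x => ((-1 * (h x - g x) + 1 * h x) ^+ 2)%:E) = (fun x => (g x ^+ 2)%:E)); last first.
  by apply/funext => x; congr (_%:E); ring.
by rewrite sqrrN !expr1n mulr1.
Qed.

Lemma int_cst_sq (c : R) : (\int[mu]_x (c ^+ 2)%:E = (c ^+ 2)%:E)%E.
Proof.
have := integral_cst mu measurableT (c ^+ 2)%:E.
move=> ->.
by rewrite -[RHS]mule1; congr (_ * _)%E; exact: probability_setT.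
Qed.

End Gen.

Section Main.
Variable R : realType.
Variable mu : probability Z2 R.
Hypothesis hmu : forall n a : nat, (a < 2 ^ n)%N -> mu (coset2 n a) = ((2%:R ^- n : R)%:E).
Variable r : vfun R.
Hypothesis hr : forall n k : nat, (1 <= n)%N -> (k < 2 ^ n)%N -> 0 < r n k.
Hypothesis hsum : (\sum_(1 <= n <oo)
             ((2%:R ^- n * \big[Num.max/0]_(k < 2 ^ n) r n k)%:E) < +oo)%E.

Definition amx n := \big[Num.max/0]_(k < 2 ^ n) r n k.
Definition aa n : R := 2%:R ^- n * amx n.

Lemma amx_ge0 n : 0 <= amx n. Proof. exact: bigmax0_ge0. Qed.
Lemma r_le_amx n k : (k < 2 ^ n)%N -> r n k <= amx n.
Proof. exact: le_bigmax0. Qed.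
Lemma amx_gt0 n : (1 <= n)%N -> 0 < amx n.
Proof. move=> hn; have h0 : (0 < 2 ^ n)%N by rewrite expn_gt0. exact: lt_le_trans (hr n 0 hn h0) (r_le_amx n 0 h0). Qed.
Lemma aa_ge0 n : 0 <= aa n.
Proof. by apply: mulr_ge0; [rewrite invr_ge0 exprn_ge0 | exact: amx_ge0]. Qed.
Lemma aa_gt0 n : (1 <= n)%N -> 0 < aa n.
Proof. by move=> hn; apply: mulr_gt0; [rewrite invr_gt0 exprn_gt0 | exact: amx_gt0]. Qed.

Definition gfun (p : vfun R) k j := (p k j - p k.-1 (j %% 2 ^ k.-1)%N) ^+ 2 / aa k.
Definition ee p k (x : Z2) := (gfun p k (trunc2 k x))%:E.
Definition S0 p x := (\sum_(k <oo) ee p k.+1 x)%E.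
Definition TT n := (\sum_(n <= k <oo) (aa k.+1)%:E)%E.

Lemma gfun_ge0 p k j : 0 <= gfun p k j.
Proof. by apply: divr_ge0; [exact: sqr_ge0 | exact: aa_ge0]. Qed.
Lemma ee_ge0 p k x : (0 <= ee p k x)%E.
Proof. by rewrite lee_fin gfun_ge0. Qed.
Lemma ee_meas p k : measurable_fun setT (ee p k).
Proof. exact: (@meas_trunc _ (\bar R) (fun j => (gfun p k j)%:E) k). Qed.
Lemma gfunE p k x : gfun p k (trunc2 k x) = (ptilde p k x - ptilde p k.-1 x) ^+ 2 / aa k.
Proof. by rewrite /gfun /ptilde trunc2_mod. Qed.
Lemma S0_ge0 p x : (0 <= S0 p x)%E.
Proof. by apply: nneseries_ge0 => n _ _; exact: ee_ge0. Qed.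
Lemma S0_meas p : measurable_fun setT (S0 p).
Proof.
apply: (@ge0_emeasurable_sum _ Z2 R setT (fun k => ee p k.+1) xpredT).
- by move=> k x _ _; exact: ee_ge0.
- by move=> k _; exact: ee_meas.
Qed.

Lemma H1term_ge0 p k : (1 <= k)%N -> 0 <= H1term r p k.
Proof.
move=> hk; apply: sumr_ge0 => j _; apply: divr_ge0; first exact: sqr_ge0.
exact/ltW/hr.
Qed.

Lemma int_ee p k : (1 <= k)%N -> (\int[mu]_x ee p k x <= (H1term r p k)%:E)%E.
Proof.
move=> hk; rewrite /ee (int_step _ _ hmu); last exact: gfun_ge0.

rewrite lee_fin.
apply: ler_sum => j _; rewrite /gfun.
have hM := amx_gt0 k hk.
have h2 : (2%:R ^+ k : R) != 0 by rewrite expf_neq0 // pnatr_eq0.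
have -> : (p k j - p k.-1 (j %% 2 ^ k.-1)%N) ^+ 2 / aa k * 2%:R ^- k =
   (p k j - p k.-1 (j %% 2 ^ k.-1)%N) ^+ 2 / amx k.
  by rewrite /aa; field; rewrite h2 gt_eqF.
apply: ler_wpM2l; first exact: sqr_ge0.
rewrite lef_pV2 ?posrE //; first exact: r_le_amx.
exact: hr.
Qed.

Lemma H1term0 p : H1term r p 0 = 0.
Proof. by rewrite /H1term big_ord1 /= modn1 subrr expr0n mul0r. Qed.

Lemma H1term_ge0' p k : 0 <= H1term r p k.
Proof. by case: k => [|k]; [rewrite H1term0 | exact: H1term_ge0]. Qed.

Lemma int_S0 p : (\int[mu]_x S0 p x <= H1semi2 r p)%E.
Proof.
rewrite /S0 integral_nneseries //; last 2 first.
- by move=> n; exact: ee_meas.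
- by move=> n x _; exact: ee_ge0.
rewrite /H1semi2 -eseries_shift1; last by move=> n; rewrite lee_fin H1term_ge0'.
apply: lee_nneseries => [n _ _|n _]; first by apply: integral_ge0 => x _; exact: ee_ge0.
exact: int_ee.
Qed.

Lemma TT0E : TT 0 = (\sum_(1 <= n <oo) (aa n)%:E)%E.
Proof. by rewrite /TT (@eseries_shift1 R (fun k => (aa k)%:E)) // => n; rewrite lee_fin aa_ge0. Qed.

Lemma TT_ge0 n : (0 <= TT n)%E.
Proof. by apply: nneseries_ge0 => k _ _; rewrite lee_fin aa_ge0. Qed.

Lemma TT_le n : (TT n <= TT 0)%E.
Proof.
rewrite /TT (nneseries_split_cond 0 n); last by move=> k _; rewrite lee_fin aa_ge0.
rewrite add0n; apply: leeDr; apply: sume_ge0 => k _; by rewrite lee_fin aa_ge0.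
Qed.

Lemma TT0_lt : (TT 0 < +oo)%E.
Proof. by rewrite TT0E; exact: hsum. Qed.

Lemma TT_fin n : TT n \is a fin_num.
Proof. by rewrite ge0_fin_numE ?TT_ge0 // (le_lt_trans (TT_le n) TT0_lt). Qed.

Lemma TT_gt0 n : (0 < TT n)%E.
Proof.
apply: (@lt_le_trans _ _ (\sum_(n <= k < n.+1) (aa k.+1)%:E)%E).
  by rewrite big_nat1 lte_fin aa_gt0.
by apply: nneseries_lim_ge => k _ _; rewrite lee_fin aa_ge0.
Qed.

Lemma TT_cvg : (TT n @[n --> \oo] --> 0)%E.
Proof.
apply: (@nneseries_tail_cvg R (fun k => (aa k.+1)%:E) xpredT).
  exact: TT0_lt.
by move=> k _; rewrite lee_fin aa_ge0.
Qed.

Definition SA n i := \sum_(k < i) aa (n + k).+1.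
Definition Q p n x i := \sum_(k < i) gfun p (n + k).+1 (trunc2 (n + k).+1 x).

Lemma SA_ge0 n i : 0 <= SA n i.
Proof. by apply: sumr_ge0 => k _; exact: aa_ge0. Qed.
Lemma Q_ge0 p n x i : 0 <= Q p n x i.
Proof. by apply: sumr_ge0 => k _; exact: gfun_ge0. Qed.

Lemma core p n x i : (ptilde p (n + i) x - ptilde p n x) ^+ 2 <= SA n i * Q p n x i.
Proof.
elim: i => [|i IH].
  by rewrite addn0 subrr /SA /Q !big_ord0 mul0r expr2 mul0r.
rewrite /SA /Q !big_ord_recr /= -/(SA n i) -/(Q p n x i).
have -> : ptilde p (n + i.+1) x - ptilde p n x =
  (ptilde p (n + i) x - ptilde p n x) + (ptilde p (n + i).+1 x - ptilde p (n + i) x).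
  by rewrite addnS; ring.
rewrite gfunE /=.
apply: cs_step => //; [exact: SA_ge0 | exact: Q_ge0 | exact: aa_gt0].
Qed.


Lemma shift_sum (F : nat -> \bar R) n i :
  (\sum_(k < i) F (n + k)%N = \sum_(n <= k < n + i) F k)%E.
Proof.
rewrite -{2}[n]add0n big_addn addKn big_mkord.
by apply: eq_bigr => k _; rewrite addnC.
Qed.

Lemma SA_le n i : ((SA n i)%:E <= TT n)%E.
Proof.
rewrite /SA -sumEFin (shift_sum (fun k => (aa k.+1)%:E)).
by apply: nneseries_lim_ge => k _ _; rewrite lee_fin aa_ge0.
Qed.

Lemma Q_le p n x i : ((Q p n x i)%:E <= S0 p x)%E.
Proof.
rewrite /Q -sumEFin (shift_sum (fun k => ee p k.+1 x)).
apply: (@le_trans _ _ (\sum_(0 <= k < n + i) ee p k.+1 x)%E).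
  rewrite [X in (_ <= X)%E](@big_cat_nat _ _ _ n 0 (n + i)) /= ?leq_addr //.
  by apply: leeDr; apply: sume_ge0 => k _; exact: ee_ge0.
by apply: nneseries_lim_ge => k _ _; exact: ee_ge0.
Qed.

Lemma bound_diff p n m x : (n <= m)%N ->
  (((ptilde p m x - ptilde p n x) ^+ 2)%:E <= TT n * S0 p x)%E.
Proof.
move=> nm; rewrite -(subnKC nm).
apply: (@le_trans _ _ ((SA n (m - n))%:E * (Q p n x (m - n))%:E)%E).
  by rewrite -EFinM lee_fin core.
apply: lee_pmul.
- by rewrite lee_fin SA_ge0.
- by rewrite lee_fin Q_ge0.
- exact: SA_le.
- exact: Q_le.
Qed.

Lemma ptilde0 (p : vfun R) x : ptilde p 0 x = p 0%N 0%N.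
Proof. by rewrite /ptilde trunc20. Qed.

Lemma bound_sq p m x :
  (((ptilde p m x) ^+ 2)%:E <= (1 + TT 0) * ((p 0%N 0%N ^+ 2)%:E + S0 p x))%E.
Proof.
have h := core p 0 x m; rewrite add0n ptilde0 in h.
have h2 := @cs_step R _ _ _ (p 0%N 0%N) 1 h (SA_ge0 0 m) (Q_ge0 p 0 x m) (@ltr01 R).
rewrite subrK divr1 in h2.
apply: (@le_trans _ _ ((1 + SA 0 m)%:E * ((p 0%N 0%N ^+ 2)%:E + (Q p 0 x m)%:E))%E).
  by rewrite -EFinD -EFinM lee_fin addrC [X in _ * X]addrC.
apply: lee_pmul.
- by rewrite lee_fin addr_ge0 ?SA_ge0.
- by rewrite -EFinD lee_fin addr_ge0 ?sqr_ge0 ?Q_ge0.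
- apply: (@le_trans _ _ (1 + (SA 0 m)%:E)%E); first by rewrite EFinD.
  by apply: leeD => //; exact: SA_le.
- by apply: leeD => //; exact: Q_le.
Qed.


Lemma S0_fin p x : (S0 p x < +oo)%E -> S0 p x \is a fin_num.
Proof. by move=> h; rewrite ge0_fin_numE ?S0_ge0. Qed.

Lemma ptilde_cvg (p : vfun R) x : (S0 p x < +oo)%E -> cvgn (fun m => ptilde p m x).
Proof.
move=> hS.
pose d k := ptilde p k.+1 x - ptilde p k x.
have cn : cvgn [normed series d].
  apply: nondecreasing_is_cvgn.
    by apply: nondecreasing_series => n _ _; exact: normr_ge0.
  exists ((fine (TT 0) + fine (S0 p x)) / 2) => _ [m _ <-] /=.
  apply: (@le_trans _ _ ((SA 0 m + Q p 0 x m) / 2)).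
    rewrite seriesEord /= /SA /Q -big_split /= mulr_suml.
    apply: ler_sum => k _; rewrite gfunE /=.
    exact: abs_le_am (aa_gt0 _ _).
  apply: ler_pM => //.
  - by rewrite addr_ge0 ?SA_ge0 ?Q_ge0.
  - apply: lerD.
      by rewrite -lee_fin fineK ?TT_fin //; exact: SA_le.
    by rewrite -lee_fin fineK ?S0_fin //; exact: Q_le.
have cs := normed_cvg cn.
have -> : (fun m => ptilde p m x) = (fun m => p 0%N 0%N + series d m).
  apply/funext => m; rewrite /series /= telescope_sumr // ptilde0.
  by rewrite addrC subrK.
by apply: is_cvgD => //; exact: is_cvg_cst.
Qed.


Definition flim (p : vfun R) (x : Z2) : R := fine (limn_esup (fun m => (ptilde p m x)%:E)).

Lemma ptilde_meas (p : vfun R) n : measurable_fun setT (ptilde p n).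
Proof. exact: (@meas_trunc _ R (p n) n). Qed.

Lemma flim_meas p : measurable_fun setT (flim p).
Proof.
apply: measurableT_comp => //.
apply: (measurable_fun_limn_esup (f := fun m x => (ptilde p m x)%:E)) => m.
exact: (@meas_trunc _ (\bar R) (fun j => (p m j)%:E) m).
Qed.

Lemma flim_cvg (p : vfun R) x : (S0 p x < +oo)%E ->
  (fun m => ptilde p m x) @ \oo --> flim p x.
Proof.
move=> hS; have c := ptilde_cvg p x hS.
set u := (fun m => ptilde p m x) in c *.
have ce : (fun m => (u m)%:E) @ \oo --> (limn u)%:E.
  by apply: cvg_comp c _.
rewrite /flim is_cvg_limn_esupE; last by apply/cvg_ex; eexists; exact: ce.
by rewrite (cvg_lim _ ce).
Qed.

Lemma bound_lim p n x :
  (((ptilde p n x - flim p x) ^+ 2)%:E <= TT n * S0 p x)%E.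
Proof.
have [hS|hS] := ltP (S0 p x) +oo%E; last first.
  have -> : S0 p x = +oo%E by apply/eqP; rewrite eq_le leey hS.
  by rewrite gt0_muley ?leey // TT_gt0.
have c := flim_cvg p x hS.
rewrite -(fineK (TT_fin n)) -(fineK (S0_fin p x hS)) -EFinM lee_fin.
have cg : (fun m => (ptilde p n x - ptilde p m x) ^+ 2) @ \oo --> (ptilde p n x - flim p x) ^+ 2.
  rewrite expr2; under eq_fun => m do rewrite expr2.
  apply: cvgM; apply: cvgB => //; exact: cvg_cst.
rewrite -(cvg_lim _ cg).
apply: limr_le; first by apply/cvg_ex; eexists; exact: cg.
near=> m.
have nm : (n <= m)%N by near: m; exists n.
have := bound_diff p n m x nm.
rewrite -(fineK (TT_fin n)) -(fineK (S0_fin p x hS)) -EFinM lee_fin.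
by rewrite -opprB sqrrN.
Unshelve. all: by end_near.
Qed.


Lemma fin_lty (y : \bar R) : y \is a fin_num -> (y < +oo)%E.
Proof. by rewrite fin_numElt => /andP[]. Qed.

Lemma H_ge0 p : (0 <= H1semi2 r p)%E.
Proof. by apply: nneseries_ge0 => n hn _; rewrite lee_fin H1term_ge0. Qed.

Lemma H_fin p : inH1 r p -> H1semi2 r p \is a fin_num.
Proof. by move=> h; rewrite ge0_fin_numE ?H_ge0. Qed.

Lemma int_diff p n :
  (\int[mu]_x ((ptilde p n x - flim p x) ^+ 2)%:E <= TT n * H1semi2 r p)%E.
Proof.
apply: (@le_trans _ _ (\int[mu]_x (TT n * S0 p x))%E).
  apply: ge0_le_integral => //.
  all: try (by move=> x _; rewrite lee_fin sqr_ge0).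
  - exact: (@sq_meas R _ (measurable_funB (ptilde_meas p n) (flim_meas p))).
  - exact: (measurable_funeM _ (S0_meas p)).
  - by move=> x _; exact: bound_lim.
rewrite ge0_integralZl //.
- by apply: lee_wpmul2l; [exact: TT_ge0 | exact: int_S0].
- exact: S0_meas.
- by move=> x _; exact: S0_ge0.
- exact: TT_ge0.
Qed.

Lemma L2conv p : inH1 r p ->
  ((fun n => \int[mu]_x ((ptilde p n x - flim p x) ^+ 2)%:E) @ \oo --> 0%E)%E.
Proof.
move=> hp.
apply: (@squeeze_cvge _ _ _ _ (cst 0%E) _ (fun n => TT n * H1semi2 r p)%E).
- near=> n; apply/andP; split.
    by apply: integral_ge0 => x _; rewrite lee_fin sqr_ge0.
  exact: int_diff.
- exact: cvg_cst.
- rewrite -(mul0e (H1semi2 r p)).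
  apply: cvgeM; first by apply: mule_def_fin => //; exact: H_fin.
    exact: TT_cvg.
  exact: cvg_cst.
Unshelve. all: by end_near.
Qed.

Lemma int_pt_sq p m : (\int[mu]_x (ptilde p m x ^+ 2)%:E <=
   (1 + TT 0) * ((p 0%N 0%N ^+ 2)%:E + H1semi2 r p))%E.
Proof.
have k0 : (0 <= 1 + TT 0)%E by rewrite adde_ge0 ?TT_ge0.
have mc : measurable_fun setT (fun x : Z2 => (p 0%N 0%N ^+ 2)%:E + S0 p x)%E.
  by apply: emeasurable_funD => //; exact: S0_meas.
apply: (@le_trans _ _ (\int[mu]_x ((1 + TT 0) * ((p 0%N 0%N ^+ 2)%:E + S0 p x)))%E).
  apply: ge0_le_integral => //.
  all: try (by move=> x _; rewrite lee_fin sqr_ge0).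
  - exact: (@sq_meas R _ (ptilde_meas p m)).
  - exact: (measurable_funeM _ mc).
  - by move=> x _; exact: bound_sq.
rewrite ge0_integralZl //; last by move=> x _; rewrite adde_ge0 ?lee_fin ?sqr_ge0 ?S0_ge0.
apply: lee_wpmul2l => //.
rewrite ge0_integralD //.
- rewrite int_cst_sq; apply: leeD => //; exact: int_S0.
- by move=> x _; rewrite lee_fin sqr_ge0.
- by move=> x _; exact: S0_ge0.
- exact: S0_meas.
Qed.


Lemma part1 p : inH1 r p -> exists f : Z2 -> R, L2limit mu p f.
Proof.
move=> hp; exists (flim p); split; first exact: flim_meas.
split; last exact: L2conv.
apply/integrableP; split; first exact: (@sq_meas R _ (flim_meas p)).
under eq_integral => x _ do rewrite gee0_abs ?lee_fin ?sqr_ge0 //.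
apply: (le_lt_trans (@int_sq_le R mu _ _ (flim_meas p) (ptilde_meas p 0))).
apply: (@le_lt_trans _ _ (2%:E * (TT 0 * H1semi2 r p) +
   2%:E * ((1 + TT 0) * ((p 0%N 0%N ^+ 2)%:E + H1semi2 r p)))%E).
  apply: leeD; apply: lee_wpmul2l => //; [exact: int_diff | exact: int_pt_sq].
apply: fin_lty.
have hT := TT_fin 0; have hH := H_fin p hp.
by rewrite fin_numD !fin_numM // ?fin_numD ?hT ?hH.
Qed.


Lemma part3 : exists C : R, 0 <= C /\
     forall (p : vfun R) (f : Z2 -> R), inH1 r p -> L2limit mu p f ->
       (\int[mu]_x (f x ^+ 2)%:E <= (C ^+ 2 * H1norm2 r p)%:E)%E.
Proof.
have T0 : 0 <= fine (TT 0) by apply: fine_ge0; exact: TT_ge0.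
exists (Num.sqrt (2 * (1 + fine (TT 0)))); split; first exact: sqrtr_ge0.
move=> p f hp [mf [intf cf]].
rewrite sqr_sqrtr; last by apply: mulr_ge0 => //; rewrite addr_ge0.
set K := ((1 + TT 0) * ((p 0%N 0%N ^+ 2)%:E + H1semi2 r p))%E.
have hT := fineK (TT_fin 0); have hH := fineK (H_fin p hp).
have KE : ((2 * (1 + fine (TT 0)) * H1norm2 r p)%:E = 2%:E * K)%E.
  rewrite /K /H1norm2 -{2}hT -{2}hH -!EFinD -!EFinM.
  by congr (_%:E); ring.
have Kf : K \is a fin_num by rewrite fin_numM ?fin_numD ?hT ?TT_fin ?H_fin.
rewrite KE.
have hcv : ((fun n => 2%:E * \int[mu]_x ((ptilde p n x - f x) ^+ 2)%:E + 2%:E * K) @ \oo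
   --> 2%:E * 0 + 2%:E * K)%E.
  apply: cvgeD; first by apply: fin_num_adde_defl; rewrite fin_numM.
    apply: cvgeM; [exact: mule_def_fin | exact: cvg_cst | exact: cf].
  exact: cvg_cst.
rewrite mule0 add0e in hcv.
rewrite -(cvg_lim _ hcv).
apply: lime_ge; first by apply/cvg_ex; eexists; exact: hcv.
near=> n.
apply: le_trans (@int_sq_le R mu _ _ mf (ptilde_meas p n)) _.
apply: leeD => //; apply: lee_wpmul2l => //; exact: int_pt_sq.
Unshelve. all: by end_near.
Qed.


Lemma int_sq_lt (g : Z2 -> R) : mu.-integrable setT (fun x => (g x ^+ 2)%:E) ->
  (\int[mu]_x (g x ^+ 2)%:E)%E \is a fin_num.
Proof.
move=> /integrableP[_]; under eq_integral => x _ do rewrite gee0_abs ?lee_fin ?sqr_ge0 //.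
by move=> h; rewrite ge0_fin_numE // integral_ge0 // => x _; rewrite lee_fin sqr_ge0.
Qed.

Lemma part2 (p q : vfun R) (a b : R) (fp fq : Z2 -> R) :
  L2limit mu p fp -> L2limit mu q fq ->
  L2limit mu (fun n k => a * p n k + b * q n k) (fun x => a * fp x + b * fq x).
Proof.
move=> [mp [ip cp]] [mq [iq cq]].
have mc := @lin_meas R fp fq a b mp mq.
split; first exact: mc.
split.
  apply/integrableP; split; first exact: (@sq_meas R _ mc).
  under eq_integral => x _ do rewrite gee0_abs ?lee_fin ?sqr_ge0 //.
  apply: (le_lt_trans (@int_comb R mu _ _ a b mp mq)).
  apply: fin_lty.
  by rewrite fin_numD !fin_numM // ?int_sq_lt.
have E n : (\int[mu]_x ((ptilde (fun n k => a * p n k + b * q n k) n x - (a * fp x + b * fq x)) ^+ 2)%:E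
   = \int[mu]_x ((a * (ptilde p n x - fp x) + b * (ptilde q n x - fq x)) ^+ 2)%:E)%E.
  by apply: eq_integral => x _; congr (_%:E); rewrite /ptilde; ring.
apply: (@squeeze_cvge _ _ _ _ (cst 0%E) _ (fun n =>
   (2 * a ^+ 2)%:E * \int[mu]_x ((ptilde p n x - fp x) ^+ 2)%:E +
   (2 * b ^+ 2)%:E * \int[mu]_x ((ptilde q n x - fq x) ^+ 2)%:E)%E).
- near=> n; rewrite E; apply/andP; split.
    by apply: integral_ge0 => x _; rewrite lee_fin sqr_ge0.
  exact: (@int_comb R mu _ _ a b (measurable_funB (ptilde_meas p n) mp)
                                 (measurable_funB (ptilde_meas q n) mq)).
- exact: cvg_cst.
- have -> : 0%E = ((2 * a ^+ 2)%:E * 0 + (2 * b ^+ 2)%:E * 0)%E by rewrite !mule0 adde0.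
  apply: cvgeD; first by rewrite !mule0.
    by apply: cvgeM; [exact: mule_def_fin | exact: cvg_cst | exact: cp].
  by apply: cvgeM; [exact: mule_def_fin | exact: cvg_cst | exact: cq].
Unshelve. all: by end_near.
Qed.

Lemma main_result :
  (forall p : vfun R, inH1 r p -> exists f : Z2 -> R, L2limit mu p f)
  /\
  (forall (p q : vfun R) (a b : R) (fp fq : Z2 -> R),
      inH1 r p -> inH1 r q -> L2limit mu p fp -> L2limit mu q fq ->
      L2limit mu (fun n k => a * p n k + b * q n k) (fun x => a * fp x + b * fq x))
  /\
  (exists C : R, 0 <= C /\
     forall (p : vfun R) (f : Z2 -> R), inH1 r p -> L2limit mu p f ->
       (\int[mu]_x (f x ^+ 2)%:E <= (C ^+ 2 * H1norm2 r p)%:E)%E).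
Proof.
split; first exact: part1.
split; last exact: part3.
by move=> p q a b fp fq _ _; exact: part2.
Qed.

End Main.

Theorem proposition2p1 (R : realType) (mu : probability Z2 R)
  (hmu : forall n a : nat, (a < 2 ^ n)%N -> mu (coset2 n a) = ((2%:R ^- n : R)%:E))
  (r : vfun R)
  (hr : forall n k : nat, (1 <= n)%N -> (k < 2 ^ n)%N -> 0 < r n k)
  (hsum : (\sum_(1 <= n <oo)
             ((2%:R ^- n * \big[Num.max/0]_(k < 2 ^ n) r n k)%:E) < +oo)%E) :
  (forall p : vfun R, inH1 r p -> exists f : Z2 -> R, L2limit mu p f)
  /\
  (forall (p q : vfun R) (a b : R) (fp fq : Z2 -> R),
      inH1 r p -> inH1 r q -> L2limit mu p fp -> L2limit mu q fq ->
      L2limit mu (fun n k => a * p n k + b * q n k) (fun x => a * fp x + b * fq x))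
  /\
  (exists C : R, 0 <= C /\
     forall (p : vfun R) (f : Z2 -> R), inH1 r p -> L2limit mu p f ->
       (\int[mu]_x (f x ^+ 2)%:E <= (C ^+ 2 * H1norm2 r p)%:E)%E).
Proof. exact: (@main_result R mu hmu r hr hsum). Qed.
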